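(* Let $G$ be a finite simple graph with maximum degree at most $3$ and let $CG$ be its clawed graph, with $n=|E(CG)|$. Then $M_2(CG)\simeq S^{\frac{2}{3}n-1}$.
   Context: For a graph $G$ of maximum degree at most $3$, the clawed graph $CG$ is obtained by subdividing every edge of $G$ (replacing $\{u,v\}$ by a new vertex $w$ and edges $\{u,w\},\{w,v\}$) and then attaching new leaves (pendant edges to new vertices) to every original vertex $v\in V(G)$ so that every original vertex has degree exactly $3$. A $2$-matching of a graph is a set of edges such that every vertex has degree at most $2$ in it. The $2$-matching complex $M_2(G)$ is the simplicial complex whose vertices are the edges of $G$ and whose faces are the $2$-matchings of $G$. $\simeq$ denotes homotopy equivalence. *)

(* Defs.v *)
From HB Require Import structures.
From mathcomp Require Import all_boot all_order all_algebra.
From mathcomp Require Import all_classical all_reals all_analysis.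
Set Implicit Arguments. Unset Strict Implicit. Unset Printing Implicit Defensive.
Import Order.TTheory GRing.Theory Num.Theory numFieldNormedType.Exports.
Local Open Scope classical_set_scope.
Local Open Scope ring_scope.

(* Finite simple graphs: a vertex finType V with an adjacency relation *)
(* adj (assumed symmetric and irreflexive where needed).               *)

Section Graphs.
Variables (V : finType) (adj : rel V).

Definition deg (v : V) : nat := #|[set w | adj v w]|.

Definition is_edge (s : {set V}) : bool :=
  [exists x, exists y, adj x y && (s == [set x; y]%SET)].

Definition edge_type := {s : {set V} | is_edge s}.
HB.instance Definition _ := Finite.on edge_type.

Definition two_matching (M : {set edge_type}) : bool :=
  [forall v : V, #|[set e in M | v \in val e]| <= 2]%N.

End Graphs.

(* The clawed graph CG of G.                                           *)
(*  vertices:  original vertices v : V,                                *)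
(*             subdivision vertices (one per edge s of G),             *)
(*             leaves (v, i) with i < 3 - deg v (new pendant vertices) *)

Section Clawed.
Variables (V : finType) (adj : rel V).

Definition leaf_pred (p : V * 'I_3) : bool := (p.2 < 3 - deg adj p.1)%N.

Definition CGV : finType :=
  ((V + edge_type adj) + {p : V * 'I_3 | leaf_pred p})%type.

Definition cg_adj (a b : CGV) : bool :=
  match a, b with
  | inl (inl v), inl (inr s) => v \in val s
  | inl (inr s), inl (inl v) => v \in val s
  | inl (inl v), inr p => (val p).1 == v
  | inr p, inl (inl v) => (val p).1 == v
  | _, _ => false
  end.

End Clawed.

(* Geometric realization of a finite simplicial complex on vertex set  *)
(* E, given by its predicate of faces, as a subspace of R^#|E|:        *)
(* points of the standard simplex whose support is a face.             *)

Definition realization (R : realType) (E : finType) (face : pred {set E})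
  : set 'rV[R]_#|E| :=
  [set x : 'rV[R]_#|E| | (forall i, 0 <= x ord0 i) /\ \sum_i x ord0 i = 1 /\
           face [set e | x ord0 (enum_rank e) != 0]%SET].

Definition M2 (W : finType) (r : rel W) : pred {set edge_type r} :=
  fun M => two_matching M.

(* unit sphere S^(k-1) in R^k (Euclidean norm) *)
Definition unit_sphere (R : realType) (k : nat) : set 'rV[R]_k :=
  [set x | \sum_i x ord0 i ^+ 2 = 1].

Section Homotopy.
Variable R : realType.

Definition homotopic_on (m k : nat) (A : set 'rV[R]_m) (B : set 'rV[R]_k)
    (f g : 'rV[R]_m -> 'rV[R]_k) : Prop :=
  exists H : R * 'rV[R]_m -> 'rV[R]_k,
    {within `[0, 1]%classic `*` A, continuous H} /\
    (forall t x, `[0, 1]%classic t -> A x -> B (H (t, x))) /\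
    (forall x, A x -> H (0, x) = f x) /\
    (forall x, A x -> H (1, x) = g x).

Definition homotopy_equivalent (m k : nat) (A : set 'rV[R]_m)
    (B : set 'rV[R]_k) : Prop :=
  exists (f : 'rV[R]_m -> 'rV[R]_k) (g : 'rV[R]_k -> 'rV[R]_m),
    (forall x, A x -> B (f x)) /\ (forall y, B y -> A (g y)) /\
    {within A, continuous f} /\ {within B, continuous g} /\
    homotopic_on A A (g \o f) id /\ homotopic_on B B (f \o g) id.

End Homotopy.

(* Main.v *)
Require Import Defs.
From HB Require Import structures.
From mathcomp Require Import all_boot all_order all_algebra.
From mathcomp Require Import all_classical all_reals all_analysis.
Set Implicit Arguments. Unset Strict Implicit. Unset Printing Implicit Defensive.
Import Order.TTheory GRing.Theory Num.Theory numFieldNormedType.Exports.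
Local Open Scope classical_set_scope.
Local Open Scope ring_scope.

Section Cont.
Variable R : realType.

Lemma cont_entry m n (i : 'I_m) (j : 'I_n) (x : 'M[R]_(m, n)) :
  {for x, continuous (fun y : 'M[R]_(m, n) => y i j)}.
Proof.
move: x => u A /nbhs_ballP[e /= e0 eA].
apply/nbhs_ballP; exists e => //= v [_ uv]; apply: eA; exact: uv.
Qed.


Lemma mx_cont {T : topologicalType} m n (F : T -> 'M[R]_(m, n)) x :
  (forall i j, {for x, continuous (fun y => F y i j)}) -> {for x, continuous F}.
Proof.
move=> H; apply/cvgrPdist_le => /= e e0.
near=> y.
rewrite [leLHS]/Num.Def.normr/= mx_normrE (bigmax_le _ (ltW e0))//= => i _.
rewrite !mxE/=.
move: i; near: y; apply: filter_forall => /= i.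
exact: ((cvgrPdist_le _ _).1 (H i.1 i.2)).
Unshelve. all: by end_near. Qed.

Lemma cont_sum {T : topologicalType} (I : Type) (r : seq I) (f : I -> T -> R) x :
  (forall i, {for x, continuous (f i)}) ->
  {for x, continuous (fun y => \sum_(i <- r) f i y)}.
Proof.
move=> H; elim: r => [|a r IH].
  have -> : (fun y => \sum_(i <- [::]) f i y) = fun=> 0.
    by apply/funext => y; rewrite big_nil.
  exact: cvg_cst.
have -> : (fun y => \sum_(i <- a :: r) f i y) = f a + (fun y => \sum_(i <- r) f i y).
  by apply/funext => y; rewrite big_cons.
rewrite /prop_for /continuous_at; apply: cvgD; [exact: H | exact: IH].
Qed.


Lemma contB {T : topologicalType} (f g : T -> R) x : {for x, continuous f} ->
  {for x, continuous g} -> {for x, continuous (fun y => f y - g y)}.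
Proof. by move=> Hf Hg; apply: cvgB. Qed.

Lemma contM {T : topologicalType} (f g : T -> R) x : {for x, continuous f} ->
  {for x, continuous g} -> {for x, continuous (fun y => f y * g y)}.
Proof. by move=> Hf Hg; apply: cvgM. Qed.

Lemma contV {T : topologicalType} (f : T -> R) x : f x != 0 -> {for x, continuous f} ->
  {for x, continuous (fun y => (f y)^-1)}.
Proof. by move=> H Hf; apply: cvgV. Qed.

Lemma contC {T : topologicalType} (c : R) (x : T) : {for x, continuous (fun=> c)}.
Proof. exact: cvg_cst. Qed.

End Cont.
Arguments cont_entry {R m n} i j x.

Section Abs.
Variables (R : realType) (E W : finType) (phi : W * 'I_3 -> E) (psi : E -> W * 'I_3).
Hypotheses (phiK : cancel phi psi) (psiK : cancel psi phi).

Definition i3 (j : 'I_2) : 'I_3 := widen_ord (leqnSn 2) j.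
Definition o2 : 'I_3 := ord_max.
Definition xe (x : 'rV[R]_#|E|) e := x ord0 (enum_rank e).
Definition Pm (x : 'rV[R]_#|E|) : 'rV[R]_#|{: W * 'I_2}| :=
  \row_i (xe x (phi ((enum_val i).1, i3 (enum_val i).2)) - xe x (phi ((enum_val i).1, o2))).
Definition nrm n (y : 'rV[R]_n) := Num.sqrt (\sum_i y ord0 i ^+ 2).
Definition Ff x := (nrm (Pm x))^-1 *: Pm x.
Definition ze (z : 'rV[R]_#|{: W * 'I_2}|) w j := z ord0 (enum_rank (w, j)).
Definition uu z w (i : 'I_3) := if (i : nat) == 2%N then 0 else ze z w (inord i).
Definition mm z w := Num.min (ze z w ord0) (Num.min (ze z w ord_max) 0).
Definition Qv z : 'rV[R]_#|E| :=
  \row_k (uu z (psi (enum_val k)).1 (psi (enum_val k)).2 - mm z (psi (enum_val k)).1).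
Definition Gg z := (\sum_k Qv z ord0 k)^-1 *: Qv z.

Lemma Qv_phi z w i : Qv z ord0 (enum_rank (phi (w, i))) = uu z w i - mm z w.
Proof. by rewrite mxE enum_rankK phiK. Qed.

Lemma uu_i3 z w j : uu z w (i3 j) = ze z w j.
Proof.
rewrite /uu /=; case: j => [[|[|j]] Hj] //=; congr ze; apply: val_inj; rewrite /= inordK //.
Qed.

Lemma uu_o2 z w : uu z w o2 = 0.
Proof. by []. Qed.

Lemma mm_le z w i : mm z w <= uu z w i.
Proof.
rewrite /mm /uu; case: i => [[|[|[|i]]] Hi] //=.
- have -> : inord 0 = ord0 :> 'I_2 by apply: val_inj; rewrite /= inordK.
  by rewrite ge_min lexx.
- have -> : inord 1 = ord_max :> 'I_2 by apply: val_inj; rewrite /= inordK.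
  by rewrite ge_min !ge_min lexx orbT.
- by rewrite !ge_min lexx !orbT.
Qed.

Lemma mm_att z w : exists i, uu z w i = mm z w.
Proof.
rewrite /mm; rewrite !minEle.
case: ifP => _.
  exists (i3 ord0); by rewrite uu_i3.
case: ifP => _.
  exists (i3 ord_max); by rewrite uu_i3.
by exists o2.
Qed.


Lemma block_cases (i : 'I_3) : i = o2 \/ exists j, i = i3 j.
Proof.
case: i => [[|[|[|i]]] Hi].
- by right; exists ord0; apply: val_inj.
- by right; exists ord_max; apply: val_inj.
- by left; apply: val_inj.
- by [].
Qed.

Lemma row_neq0 n (y : 'rV[R]_n) : y != 0 -> exists i, y ord0 i != 0.
Proof.
move=> ny; apply/existsP; apply: contraNT ny => /existsPn H.
by apply/eqP/rowP => i; rewrite mxE; move: (H i); rewrite negbK => /eqP.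
Qed.

Lemma sumsq_gt0 n (y : 'rV[R]_n) : y != 0 -> 0 < \sum_i y ord0 i ^+ 2.
Proof.
move=> /row_neq0 [i Hi]; rewrite (bigD1 i) //=.
apply: ltr_wpDr; first by apply: sumr_ge0 => k _; apply: sqr_ge0.
by rewrite lt_def sqr_ge0 sqrf_eq0 Hi.
Qed.

Lemma norm_scale n (y : 'rV[R]_n) : y != 0 ->
  \sum_i (((nrm y)^-1 *: y) ord0 i) ^+ 2 = 1.
Proof.
move=> ny; have sp := sumsq_gt0 ny.
under eq_bigr do rewrite mxE exprMn.
rewrite -mulr_sumr exprVn /nrm sqr_sqrtr ?ltW // mulVf // gt_eqF //.
Qed.

Lemma nrm_scale n (y : 'rV[R]_n) c : 0 < c -> \sum_i y ord0 i ^+ 2 = 1 ->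
  nrm (c *: y) = c.
Proof.
move=> c0 H; rewrite /nrm.
under eq_bigr do rewrite mxE exprMn.
by rewrite -mulr_sumr H mulr1 sqrtr_sqr gtr0_norm.
Qed.

Variable face : pred {set E}.
Hypothesis hface : forall M, face M = [forall w, [exists i, phi (w, i) \notin M]].

Lemma sum_xe (x : 'rV[R]_#|E|) : \sum_i x ord0 i = \sum_e xe x e.
Proof.
by rewrite (reindex (@enum_rank E)) //=; exists enum_val => y _; rewrite ?enum_rankK ?enum_valK.
Qed.

Lemma Pm_eq (x : 'rV[R]_#|E|) w j :
  Pm x ord0 (enum_rank (w, j)) = xe x (phi (w, i3 j)) - xe x (phi (w, o2)).
Proof. by rewrite mxE enum_rankK. Qed.

Lemma Pm_neq0 x : @realization R _ face x -> Pm x != 0.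
Proof.
move=> [x0 [x1 xf]]; apply/negP => /eqP P0.
have blk : forall w i, xe x (phi (w, i)) = xe x (phi (w, o2)).
  move=> w i; case: (block_cases i) => [->|[j ->]] //.
  by apply/eqP; rewrite -subr_eq0 -Pm_eq P0 mxE.
have z : forall e, xe x e = 0.
  move=> e; rewrite -(psiK e); case: (psi e) => w i.
  move: xf; rewrite hface => /forallP /(_ w) /existsP [i0].
  by rewrite inE negbK => /eqP H; rewrite blk -(blk w i0).
move: x1; rewrite sum_xe big1 // => /esym /eqP; by rewrite oner_eq0.
Qed.

Lemma F_in x : @realization R _ face x -> @unit_sphere R #|{: W * 'I_2}| (Ff x).
Proof. by move=> /Pm_neq0 H; rewrite /unit_sphere /=; apply: norm_scale. Qed.


Lemma Qv_ge0 z k : 0 <= Qv z ord0 k.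
Proof. by rewrite mxE subr_ge0; apply: mm_le. Qed.

Lemma sum_pos n (f : 'I_n -> R) k : (forall i, 0 <= f i) -> f k != 0 -> 0 < \sum_i f i.
Proof.
move=> H Hk; rewrite (bigD1 k) //=.
apply: ltr_wpDr; first by apply: sumr_ge0 => i _.
by rewrite lt_def Hk H.
Qed.

Lemma sphere_neq0 n (z : 'rV[R]_n) : @unit_sphere R n z -> z != 0.
Proof.
rewrite /unit_sphere /= => Hz; apply/negP => /eqP z0; move: Hz.
rewrite z0 big1 => [/eqP|i _]; first by rewrite eq_sym oner_eq0.
by rewrite mxE expr2 mul0r.
Qed.

Lemma sumQ_gt0 z : @unit_sphere R #|{: W * 'I_2}| z -> 0 < \sum_k Qv z ord0 k.
Proof.
move=> /sphere_neq0 /row_neq0 [i Hi].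
set w := (enum_val i).1; set j := (enum_val i).2.
have zej : ze z w j = z ord0 i by rewrite /ze /w /j -surjective_pairing enum_valK.
have [H1|H1] := eqVneq (Qv z ord0 (enum_rank (phi (w, i3 j)))) 0; last first.
  by apply: (sum_pos _ H1) => k; apply: Qv_ge0.
apply: (sum_pos (k := enum_rank (phi (w, o2)))); first by move=> k; apply: Qv_ge0.
rewrite Qv_phi uu_o2 sub0r oppr_eq0; apply: contra Hi => /eqP m0.
by move: H1; rewrite Qv_phi uu_i3 m0 subr0 zej => ->.
Qed.

Lemma G_in z : @unit_sphere R #|{: W * 'I_2}| z -> @realization R _ face (Gg z).
Proof.
move=> Hz; have sp := sumQ_gt0 Hz.
rewrite /realization /=; split; [|split].
- move=> i; rewrite mxE; apply: mulr_ge0; [by rewrite invr_ge0 ltW | exact: Qv_ge0].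
- by under eq_bigr do rewrite mxE; rewrite -mulr_sumr mulVf // gt_eqF.
- rewrite hface; apply/forallP => w; have [i Hi] := mm_att z w.
  apply/existsP; exists i; rewrite inE negbK mxE Qv_phi Hi subrr mulr0 //.
Qed.

Lemma GF x : @realization R _ face x -> Gg (Ff x) = x.
Proof.
move=> Hx; have yn := Pm_neq0 Hx; have sp := sumsq_gt0 yn.
move: Hx => [x0 [x1 xf]].
set c := nrm (Pm x).
have cp : 0 < c by rewrite /c /nrm sqrtr_gt0.
have ci : 0 < c^-1 by rewrite invr_gt0.
have uuE : forall w i, uu (Ff x) w i = c^-1 * (xe x (phi (w, i)) - xe x (phi (w, o2))).
  move=> w i; case: (block_cases i) => [->|[j ->]].
    by rewrite uu_o2 subrr mulr0.
  by rewrite uu_i3 /ze /Ff mxE Pm_eq.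
have mmE : forall w, mm (Ff x) w = c^-1 * (- xe x (phi (w, o2))).
  move=> w; apply/le_anti/andP; split.
    move: xf; rewrite hface => /forallP /(_ w) /existsP [i0].
    rewrite inE negbK => /eqP H.
    by apply: (le_trans (mm_le _ _ i0)); rewrite uuE /xe H sub0r.
  have [i <-] := mm_att (Ff x) w; rewrite uuE ler_pM2l //.
  by rewrite lerBrDr addNr x0.
have QE : Qv (Ff x) = c^-1 *: x.
  apply/rowP => k; rewrite [LHS]mxE uuE mmE -mulrBr opprK subrK.
  rewrite -surjective_pairing psiK /xe enum_valK mxE; congr (_ * x _ _).
rewrite /Gg QE; under eq_bigr do rewrite mxE.
by rewrite -mulr_sumr x1 mulr1 scalerA mulVf ?scale1r // gt_eqF.
Qed.

Lemma FG z : @unit_sphere R #|{: W * 'I_2}| z -> Ff (Gg z) = z.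
Proof.
move=> Hz; have sp := sumQ_gt0 Hz.
set s := \sum_k Qv z ord0 k.
have PE : Pm (Gg z) = s^-1 *: z.
  apply/rowP => i; rewrite [LHS]mxE /xe /Gg !mxE !enum_rankK !phiK /= -/s.
  rewrite -mulrBr uu_i3 uu_o2 sub0r opprK subrK.
  by rewrite /ze -surjective_pairing enum_valK; congr (_ * z _ _); apply: ord_inj; rewrite !ord1.
rewrite /Ff PE nrm_scale ?invr_gt0 // scalerA mulVf ?scale1r // invr_eq0 gt_eqF //.
Qed.


Lemma Pm_cont i j : continuous (fun y => Pm y i j).
Proof.
move=> y; have -> : (fun y => Pm y i j) = (fun y => y ord0 (enum_rank (phi ((enum_val j).1, i3 (enum_val j).2))) - y ord0 (enum_rank (phi ((enum_val j).1, o2)))).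
  by apply/funext => v; rewrite mxE.
exact: (contB (cont_entry _ _ y) (cont_entry _ _ y)).
Qed.

Lemma sq_cont {T : topologicalType} (f : T -> R) x : {for x, continuous f} ->
  {for x, continuous (fun y => f y ^+ 2)}.
Proof.
move=> H; have -> : (fun y => f y ^+ 2) = f \* f by apply/funext => y; rewrite expr2.
exact: cvgM.
Qed.

Lemma nrm_cont : continuous (fun y => nrm (Pm y)).
Proof.
move=> y; apply: (continuous_comp (f := fun y => \sum_i Pm y ord0 i ^+ 2)).
  by apply: cont_sum => i; apply: sq_cont; apply: Pm_cont.
exact: sqrt_continuous.
Qed.

Lemma F_cont : {within @realization R _ face, continuous Ff}.
Proof.
apply: continuous_in_subspaceT => x; rewrite inE => Hx.
have yn := Pm_neq0 Hx; have sp := sumsq_gt0 yn.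
apply: mx_cont => i j.
have -> : (fun y => Ff y i j) = (fun y => (nrm (Pm y))^-1 * Pm y i j).
  by apply/funext => y; rewrite /Ff mxE.
apply: contM; last exact: Pm_cont.
apply: contV; last exact: nrm_cont.
by rewrite gt_eqF // /nrm sqrtr_gt0.
Qed.


Lemma uu_cont w t z : {for z, continuous (fun y => uu y w t)}.
Proof.
have [H|H] := boolP ((t : nat) == 2%N).
  have -> : (fun y => uu y w t) = fun=> 0 by apply/funext => y; rewrite /uu H.
  exact: contC.
have -> : (fun y => uu y w t) = (fun y => y ord0 (enum_rank (w, inord t)))
  by apply/funext => y; rewrite /uu (negbTE H).
exact: cont_entry.
Qed.

Lemma mm_cont w z : {for z, continuous (fun y => mm y w)}.
Proof.
rewrite /mm /ze.
apply: continuous_min; first exact: cont_entry.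
apply: continuous_min; first exact: cont_entry.
exact: contC.
Qed.

Lemma Qv_cont i j z : {for z, continuous (fun y => Qv y i j)}.
Proof.
have -> : (fun y => Qv y i j) = (fun y => uu y (psi (enum_val j)).1 (psi (enum_val j)).2 - mm y (psi (enum_val j)).1)
  by apply/funext => y; rewrite mxE.
apply: contB; [exact: uu_cont | exact: mm_cont].
Qed.

Lemma G_cont : {within @unit_sphere R #|{: W * 'I_2}|, continuous Gg}.
Proof.
apply: continuous_in_subspaceT => z; rewrite inE => Hz.
have sp := sumQ_gt0 Hz.
apply: mx_cont => i j.
have -> : (fun y => Gg y i j) = (fun y => (\sum_k Qv y ord0 k)^-1 * Qv y i j).
  by apply/funext => y; rewrite /Gg mxE.
apply: contM; last exact: Qv_cont.
apply: contV; first by rewrite gt_eqF.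
by apply: cont_sum => k; apply: Qv_cont.
Qed.

Lemma homot_id m (A : set 'rV[R]_m) (h : 'rV[R]_m -> 'rV[R]_m) :
  (forall x, A x -> h x = x) -> homotopic_on A A h id.
Proof.
move=> hE; exists (fun p => p.2); split; [|split; [|split]].
- apply: continuous_subspaceT => p; exact: cvg_snd.
- by move=> t x _.
- by move=> x Ax; rewrite hE.
- by [].
Qed.

Theorem abs_main : homotopy_equivalent (@realization R _ face) (@unit_sphere R #|{: W * 'I_2}|).
Proof.
exists Ff, Gg; split; [|split; [|split; [|split; [|split]]]].
- exact: F_in.
- exact: G_in.
- exact: F_cont.
- exact: G_cont.
- by apply: homot_id => x Hx /=; rewrite GF.
- by apply: homot_id => x Hx /=; rewrite FG.
Qed.

End Abs.

Lemma gen_bij (E W : finType) (F : W -> {set E}) :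
  (forall e, exists v, e \in F v) ->
  (forall v w e, e \in F v -> e \in F w -> v = w) ->
  (forall v, #|F v| = 3%N) ->
  exists phi : W * 'I_3 -> E, exists psi : E -> W * 'I_3,
    [/\ cancel phi psi, cancel psi phi & forall v i, phi (v, i) \in F v].
Proof.
move=> cov disj c3.
pose phi (p : W * 'I_3) : E := enum_val (cast_ord (esym (c3 p.1)) p.2).
have phiF : forall v i, phi (v, i) \in F v by move=> v i; exact: enum_valP.
have inj : injective phi.
  move=> [v i] [w j] /= H.
  have vw : v = w by apply: (disj _ _ (phi (v, i))); rewrite ?phiF // H phiF.
  subst w; move: H; rewrite /phi /= => /enum_val_inj /cast_ord_inj -> //.
have surj : forall e, exists p, phi p = e.
  move=> e; have [v He] := cov e.
  exists (v, cast_ord (c3 v) (enum_rank_in He e)).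
  by rewrite /phi /= cast_ordK enum_rankK_in.
have bij : bijective phi.
  apply: inj_card_bij => //.
  rewrite -(card_codom inj); apply: eq_leq; apply: eq_card => e.
  by have [p <-] := surj e; rewrite codom_f.
case: bij => psi K1 K2; exists phi, psi; split => //.
Qed.

Section CG.
Local Close Scope classical_set_scope.
Variables (V : finType) (adj : rel V).
Hypotheses (adj_sym : symmetric adj) (adj_irr : irreflexive adj)
  (maxdeg : forall v : V, (deg adj v <= 3)%N).

Local Notation CG := (CGV adj).
Local Notation cadj := (@cg_adj V adj).
Local Notation E := (edge_type cadj).

Definition orig (v : V) : CG := inl (inl v).
Definition is_orig (y : CG) := if y is inl (inl _) then true else false.

Lemma edge_shape (e : E) : exists v y,
  [/\ cadj (orig v) y, val e = [set orig v; y]%SET & ~~ is_orig y].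
Proof.
case: e => s Hs /=; move: Hs => /existsP [x /existsP [y /andP [xy /eqP ->]]].
move: x y xy => [[v|t]|p] [[w|t']|p'] //= H.
- by exists v, (inl (inr t')).
- by exists v, (inr p').
- by exists w, (inl (inr t)); rewrite finset.setUC.
- by exists w, (inr p); rewrite finset.setUC.
Qed.

Definition Fv (v : V) : {set E} := [set e : E | orig v \in val e].

Lemma orig_inj : injective orig.
Proof. by move=> v w [] . Qed.

Lemma Fv_cov e : exists v, e \in Fv v.
Proof.
have [v [y [_ He _]]] := edge_shape e.
by exists v; rewrite inE He set21.
Qed.

Lemma Fv_disj v w e : e \in Fv v -> e \in Fv w -> v = w.
Proof.
have [u [y [_ He ny]]] := edge_shape e.
rewrite !inE He !inE => /orP [/eqP/orig_inj ->|/eqP vy]; last by rewrite -vy in ny.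
by case/orP => [/eqP/orig_inj ->|/eqP wy] //; rewrite -wy in ny.
Qed.


Definition Nbr v := [set y : CG | cadj (orig v) y].

Lemma card_Fv_Nbr v : #|Fv v| = #|Nbr v|.
Proof.
rewrite -(card_imset _ val_inj).
have -> : [set val e | e in Fv v] = [set [set orig v; y]%SET | y in Nbr v].
  apply/setP => S; apply/imsetP/imsetP.
    move=> [e He ->]; have [u [y [cu Ve ny]]] := edge_shape e.
    move: He; rewrite inE Ve !inE => /orP [/eqP/orig_inj ->|/eqP vy].
      by exists y; rewrite ?inE.
    by rewrite -vy in ny.
  move=> [y Hy ->].
  have pf : is_edge cadj [set orig v; y]%SET.
    apply/existsP; exists (orig v); apply/existsP; exists y.
    by rewrite inE in Hy; rewrite Hy eqxx.
  by exists (Sub _ pf) => //; rewrite inE /= set21.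
apply: card_in_imset => y1 y2; rewrite !inE => H1 H2 E12.
have : y1 \in [set orig v; y2]%SET by rewrite -E12 set22.
rewrite !inE => /orP [/eqP y1v|/eqP //].
by move: H1; rewrite y1v /orig /=.
Qed.

Definition Sv v := [set s : edge_type adj | v \in val s].
Definition Lv v := [set p : {p : V * 'I_3 | leaf_pred adj p} | (val p).1 == v].

Lemma Nbr_split v : Nbr v =
  [set (inl (inr s) : CG) | s in Sv v] :|: [set (inr p : CG) | p in Lv v].
Proof.
apply/setP => y; rewrite !inE; apply/idP/orP.
  case: y => [[w|s]|p] //= H.
    by left; apply/imsetP; exists s; rewrite ?inE.
  by right; apply/imsetP; exists p; rewrite ?inE.
case => /imsetP [s Hs ->] /=; by rewrite inE in Hs.
Qed.

Lemma card_Sv v : #|Sv v| = deg adj v.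
Proof.
rewrite -(card_imset _ val_inj).
have -> : [set val s | s in Sv v] = [set [set v; w]%SET | w in [set w | adj v w]].
  apply/setP => S; apply/imsetP/imsetP.
    move=> [[S' pf] Hs ->] /=; rewrite inE /= in Hs.
    move: pf => /existsP [x /existsP [y /andP [xy /eqP SE]]].
    move: Hs; rewrite SE !inE => /orP [/eqP ->|/eqP ->].
      by exists y; rewrite ?inE.
    by exists x; rewrite ?inE 1?adj_sym // finset.setUC.
  move=> [w Hw ->].
  have pf : is_edge adj [set v; w]%SET.
    apply/existsP; exists v; apply/existsP; exists w.
    by rewrite inE in Hw; rewrite Hw eqxx.
  by exists (Sub _ pf) => //; rewrite inE /= set21.
rewrite card_in_imset.
  rewrite /deg; apply: eq_card => w; rewrite inE; apply/idP/idP => H.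
    by rewrite in_setE.
  by move: H; rewrite in_setE.
move=> w1 w2; rewrite !inE => H1 H2 E12.
have : w1 \in [set v; w2]%SET by rewrite -E12 set22.
rewrite !inE => /orP [/eqP w1v|/eqP //].
by move: H1; rewrite w1v adj_irr.
Qed.

Lemma card_Lv v : #|Lv v| = (3 - deg adj v)%N.
Proof.
have Hle : (3 - deg adj v <= 3)%N by apply: leq_subr.
rewrite -(@card_in_imset _ _ (fun p : {p : V * 'I_3 | leaf_pred adj p} => (val p).2)); last first.
  move=> p1 p2; rewrite !inE => e1 e2 ei; apply: val_inj.
  by move: e1 e2 ei; case: (val p1) => a b; case: (val p2) => c d /= /eqP -> /eqP -> ->.
have -> : [set (val p).2 | p in Lv v] = [set widen_ord Hle j | j in [set: 'I_(3 - deg adj v)]].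
  apply/setP => i; apply/imsetP/imsetP.
    move=> [[[w i'] h] Hp ->] /=; rewrite inE /= in Hp.
    move: h; rewrite /leaf_pred /= (eqP Hp) => h.
    by exists (Ordinal h); rewrite ?inE //; apply: val_inj.
  move=> [j _ ->].
  have pf : leaf_pred adj (v, widen_ord Hle j) by rewrite /leaf_pred /= ltn_ord.
  by exists (Sub _ pf) => //; rewrite inE /=.
by rewrite card_imset ?cardsT ?card_ord //; by move=> a b /(congr1 val) /= ab; apply: val_inj.
Qed.

Lemma card_Fv v : #|Fv v| = 3%N.
Proof.
rewrite card_Fv_Nbr Nbr_split cardsU.
have -> : [set (inl (inr s) : CG) | s in Sv v] :&: [set (inr p : CG) | p in Lv v] = finset.set0.
  apply/setP => y; rewrite !inE; apply/negbTE/negP => /andP [/imsetP [s _ ->] /imsetP [p _]] //.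
rewrite cards0 subn0 !card_imset; last by move=> a b [].
  by rewrite card_Sv card_Lv subnKC.
by move=> a b [].
Qed.


Lemma card_incident_le (M : {set E}) (u : CG) (T : {set {set CG}}) :
  (forall e : E, u \in val e -> val e \in T) ->
  (#|[set e in M | u \in val e]| <= #|T|)%N.
Proof.
move=> H; rewrite -(card_imset _ val_inj); apply: subset_leq_card.
by apply/fintype.subsetP => S /imsetP [e]; rewrite inE => /andP [_ /H] ? ->.
Qed.

Lemma tm_iff (M : {set E}) : two_matching M = [forall v, ~~ (Fv v \subset M)].
Proof.
apply/forallP/forallP => H v.
  have := H (orig v).
  have -> : [set e in M | orig v \in val e] = M :&: Fv v.
    by apply/setP => e; rewrite !inE.
  apply: contraTN => sub; rewrite (finset.setIidPr sub) card_Fv //.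
case: v => [[v|s]|p].
  move/(_ v) in H.
  have -> : [set e in M | inl (inl v) \in val e] = M :&: Fv v.
    by apply/setP => e; rewrite !inE.
  have [le eq] := subset_leqif_cards (finset.subsetIr M (Fv v)).
  rewrite card_Fv in le eq.
  have ne : (M :&: Fv v == Fv v) = false by apply/negbTE; apply: contra H => /eqP <-; apply: finset.subsetIl.
  rewrite ne in eq.
  by rewrite -ltnS ltn_neqAle eq le.
- apply: (@leq_trans #|[set [set orig x; inl (inr s)] | x in val s]|).
    apply: card_incident_le => e He.
    have [w [y [c Ve ny]]] := edge_shape e.
    move: He; rewrite Ve !inE => /orP [/eqP //|/eqP uy]; subst y.
    by apply/imsetP; exists w; [exact: c|].
  apply: leq_trans (leq_imset_card _ _) _.
  case: s => S Hs /=; move: Hs => /existsP [x /existsP [y /andP [xy /eqP ->]]].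
  rewrite cards2; case: (x != y) => //.
- apply: (@leq_trans #|[set [set orig (val p).1; (inr p : CG)]]|); last by rewrite cards1.
  apply: card_incident_le => e He.
  have [w [y [c Ve ny]]] := edge_shape e.
  move: He; rewrite Ve !inE => /orP [/eqP //|/eqP uy]; subst y.
  by move: c => /= /eqP ->; rewrite ?inE eqxx.
Qed.

Lemma cg_bij : exists phi : V * 'I_3 -> E, exists psi : E -> V * 'I_3,
  [/\ cancel phi psi, cancel psi phi &
      forall M, two_matching M = [forall w, [exists i, phi (w, i) \notin M]]].
Proof.
have [phi [psi [K1 K2 HF]]] := gen_bij Fv_cov Fv_disj card_Fv.
exists phi, psi; split => // M; rewrite tm_iff.
apply: eq_forallb => w.
have -> : [exists i, phi (w, i) \notin M] = ~~ [forall i, phi (w, i) \in M].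
  by rewrite negb_forall.
congr (~~ _); apply/idP/forallP.
  by move=> sub i; apply: (fintype.subsetP sub _ (HF w i)).
move=> Hall; apply/fintype.subsetP => e He.
have := Hall (psi e).2.
have := HF (psi e).1 (psi e).2; rewrite -surjective_pairing K2 => Hw.
by rewrite (Fv_disj He Hw) -surjective_pairing K2.
Qed.

End CG.

(* n = #|E(CG)|;  M_2(CG) ~ S^(k-1) with 3k = 2n, i.e. k - 1 = 2n/3 - 1. *)
Theorem mainTheorem4 (R : realType) (V : finType) (adj : rel V)
    (adj_sym : symmetric adj) (adj_irr : irreflexive adj)
    (maxdeg : forall v : V, (deg adj v <= 3)%N) :
  exists k : nat,
    (3 * k = 2 * #|{: edge_type (@cg_adj V adj)}|)%N /\
    homotopy_equivalent (@realization R _ (@M2 _ (@cg_adj V adj)))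
                        (@unit_sphere R k).
Proof.
have [phi [psi [K1 K2 HF]]] := cg_bij adj_sym adj_irr maxdeg.
exists #|{: V * 'I_2}|; split.
  rewrite -(bij_eq_card (Bijective K1 K2)) !card_prod !card_ord.
  by rewrite mulnCA [RHS]mulnCA.
exact: (abs_main R K1 K2 HF).
Qed.
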